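(* Consider the static single-object erasure-coded Byzantine read/write protocol described in the context over a set $C$ of flexnodes, at most $b<\frac{|C|-k}{3}$ of which are Byzantine. In any execution, let $\pi$ and $\omega$ be complete operations, where $\pi$ is a read or a write and $\omega$ is a write, such that $\pi$ completes before $\omega$ is invoked. If $\pi$ executes put-data$(\langle t_\pi,v_\pi\rangle)$ on $C$ and $\omega$ executes put-data$(\langle t_\omega,v_\omega\rangle)$ on $C$, then $t_\omega>t_\pi$.
   Context: Model. $C$ is a fixed finite set of processes (''flexnodes'') over asynchronous reliable channels (messages between nonfaulty processes eventually delivered unaltered). Up to $b$ flexnodes may be Byzantine. Processes invoking reads/writes follow the protocol but may crash. Signatures are unforgeable. An $[n,k]$ RLNC code with $n=|C|$: $\mathrm{Encode}(v)$ produces $|C|$ coded elements, any $k$ of which (from the same encoding) recover $v$. Tags are pairs $(z,w)$, $z\in\mathbb{N}$, $w$ a writer identifier from a totally ordered set, with $(z_1,w_1)<(z_2,w_2)$ iff $z_1<z_2$, or $z_1=z_2$ and $w_1<w_2$. A parameter $\delta\ge1$ is fixed. A quorum is any subset of $C$ of size $\lceil (2|C|+k)/3\rceil$. State. Each flexnode keeps a set $List$ of signed triples $(\langle t,e\rangle,\sigma)$, initially holding the initial pair with tag $t_0$. Primitives (by flexnode $p$): get-tag: query all, each replies with its signed max-tag entry, wait for replies from a quorum, return the maximum tag among replies with valid signatures. put-data$(\langle t,v\rangle)$: encode $v$ into $e_1,\dots,e_{|C|}$, send $\langle t,e_j\rangle$ signed by $p$ to the $j$-th flexnode; a receiver adds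 it to $List$ if the signature verifies and no entry with tag $t$ exists, then if $|List|>\delta+1$ removes the entries with minimum tag, and acknowledges; $p$ waits for a quorum of acknowledgements. get-data: query all, each replies with its $List$, wait for a quorum, keep verified pairs, take the maximum tag appearing in at least $k$ received lists, decode and return it; if none exists the primitive does not complete. Operations: read = get-data then put-data of the obtained pair, returning it; write$(v)$ by writer $w$ = get-tag returning $t$, then put-data$(\langle (t.z+1,w),v\rangle)$. *)

(* Defs.v *)
From HB Require Import structures.
From mathcomp Require Import all_boot all_order.
Set Implicit Arguments. Unset Strict Implicit. Unset Printing Implicit Defensive.
Import Order.TTheory.

Section Protocol.
Variables (Node : finType) (d : Order.disp_t) (W : orderType d) (V : Type) (E : eqType).

Definition ptag := (nat * W)%type.
Definition tag_lt (t1 t2 : ptag) : bool :=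
  (t1.1 < t2.1)%N || ((t1.1 == t2.1) && (t1.2 < t2.2)%O).
Definition tag_le (t1 t2 : ptag) : bool := (t1 == t2) || tag_lt t1 t2.

(* A signed triple (<t, e>, sigma): ptag, coded element, identity of the signer.
   The signature is modelled symbolically: it verifies iff the signer really
   produced it, i.e. iff the triple belongs to the global set [signed] below. *)
Definition entry := (ptag * E * W)%type.
Definition etag (x : entry) : ptag := x.1.1.
Definition eelem (x : entry) : E := x.1.2.

(* Message bodies; every request/reply carries the nonce (p, c) = (invoking
   process, number of its operation). *)
Inductive body :=
| QTag of W & nat
| RTag of W & nat & entry
| QData of W & nat
| RData of W & nat & seq entry
| Put of W & nat & entry
| Ack of W & nat.

Definition body_entries (b : body) : seq entry :=
  match b with
  | RTag _ _ e => [:: e]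
  | RData _ _ l => l
  | Put _ _ e => [:: e]
  | _ => [::]
  end.

Inductive addr := ANode of Node | AProc of W.

(* msrc is the (authenticated) sender. *)
Record msg := Msg { msrc : addr; mdst : addr; mbody : body }.

Inductive op := ORead | OWrite of V.

Inductive cstate :=
| Idle
| GetTag of V & seq (Node * entry)          (* write: waiting in get-ptag *)
| GetData of seq (Node * seq entry)         (* read: waiting in get-data *)
| PutData of ptag & seq Node
| Crashed.

Record state := St {
  lists  : Node -> seq entry;
  net    : seq msg;
  cst    : W -> cstate;
  cnt    : W -> nat;            (* number of operations invoked so far *)
  signed : seq entry            (* all signatures produced so far *)
}.

Inductive label :=
| LInvoke of W & nat & op       (* process p invokes its n-th operation *)
| LPut of W & nat & ptag         (* operation (p,n) executes put-data(<t,_>) *)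
| LComplete of W & nat
| LCrash of W
| LInternal.

Definition upd (A : eqType) (R : Type) (f : A -> R) (a : A) (r : R) : A -> R :=
  fun x => if x == a then r else f x.

Variables (k b delta : nat) (Byz : {set Node}) (encode : V -> Node -> E)
          (decode : seq E -> V).

(* quorum size: ceil((2|C| + k) / 3) *)
Definition qsize : nat := (2 * #|Node| + k + 2) %/ 3.

(* "removes the entries with minimum ptag" when |List| > delta + 1 *)
Definition evict (l : seq entry) : seq entry :=
  if delta.+1 < size l then
    [seq x <- l | ~~ all (fun y => tag_le (etag x) (etag y)) l]
  else l.

Definition store (sg : seq entry) (e : entry) (l : seq entry) : seq entry :=
  evict (if (e \in sg) && ~~ has (fun x => etag x == etag e) l
         then rcons l e else l).

Definition crecv (p : W) (cur : nat) (cs : cstate) (src : addr) (bd : body)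
  : cstate :=
  match src with
  | ANode j =>
    match cs, bd with
    | GetTag v reps, RTag p' c e =>
        if [&& p' == p, c == cur & j \notin unzip1 reps]
        then GetTag v (rcons reps (j, e)) else cs
    | GetData reps, RData p' c l =>
        if [&& p' == p, c == cur & j \notin unzip1 reps]
        then GetData (rcons reps (j, l)) else cs
    | PutData t acks, Ack p' c =>
        if [&& p' == p, c == cur & j \notin acks]
        then PutData t (rcons acks j) else cs
    | _, _ => cs
    end
  | AProc _ => cs
  end.

Definition putdata (s : state) (p : W) (t : ptag) (v : V) : state :=
  St (lists s)
     (net s ++ [seq Msg (AProc p) (ANode j) (Put p (cnt s p) (t, encode v j, p))
               | j <- enum Node])
     (upd (cst s) p (PutData t [::]))
     (cnt s)
     (signed s ++ [seq (t, encode v j, p) | j <- enum Node]).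

Definition bcast (p : W) (bd : body) : seq msg :=
  [seq Msg (AProc p) (ANode j) bd | j <- enum Node].

Definition setnet (s : state) (n : seq msg) : state :=
  St (lists s) n (cst s) (cnt s) (signed s).

Inductive step : state -> label -> state -> Prop :=
| SInvoke s p o :
    cst s p = Idle ->
    step s (LInvoke p (cnt s p).+1 o)
      (St (lists s)
          (net s ++ bcast p (match o with
                             | ORead => QData p (cnt s p).+1
                             | OWrite _ => QTag p (cnt s p).+1 end))
          (upd (cst s) p (match o with
                          | ORead => GetData [::]
                          | OWrite v => GetTag v [::] end))
          (upd (cnt s) p (cnt s p).+1)
          (signed s))
| SCrash s p :
    cst s p <> Crashed ->
    step s (LCrash p) (St (lists s) (net s) (upd (cst s) p Crashed) (cnt s) (signed s))
| SNodeQTag s n1 n2 j src p c e :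
    net s = n1 ++ Msg src (ANode j) (QTag p c) :: n2 -> j \notin Byz ->
    e \in lists s j -> all (fun y => tag_le (etag y) (etag e)) (lists s j) ->
    step s LInternal (setnet s (n1 ++ n2 ++ [:: Msg (ANode j) src (RTag p c e)]))
| SNodeQData s n1 n2 j src p c :
    net s = n1 ++ Msg src (ANode j) (QData p c) :: n2 -> j \notin Byz ->
    step s LInternal
      (setnet s (n1 ++ n2 ++ [:: Msg (ANode j) src (RData p c (lists s j))]))
| SNodePut s n1 n2 j src p c e :
    net s = n1 ++ Msg src (ANode j) (Put p c e) :: n2 -> j \notin Byz ->
    step s LInternal
      (St (upd (lists s) j (store (signed s) e (lists s j)))
          (n1 ++ n2 ++ [:: Msg (ANode j) src (Ack p c)])
          (cst s) (cnt s) (signed s))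
(* any other message to a correct flexnode, or any message to a Byzantine
   flexnode, is consumed without effect (Byzantine nodes act via SByz) *)
| SNodeOther s n1 n2 j src bd :
    net s = n1 ++ Msg src (ANode j) bd :: n2 ->
    (j \in Byz \/ match bd with QTag _ _ | QData _ _ | Put _ _ _ => False | _ => True end) ->
    step s LInternal (setnet s (n1 ++ n2))
| SClient s n1 n2 p src bd :
    net s = n1 ++ Msg src (AProc p) bd :: n2 ->
    step s LInternal
      (St (lists s) (n1 ++ n2) (upd (cst s) p (crecv p (cnt s p) (cst s p) src bd))
          (cnt s) (signed s))
(* a Byzantine flexnode sends an arbitrary message; it cannot forge
   signatures, so every signed triple it sends was already produced *)
| SByz s j dst bd :
    j \in Byz -> all (fun x => x \in signed s) (body_entries bd) ->
    step s LInternal (setnet s (net s ++ [:: Msg (ANode j) dst bd]))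
| SFinTag s p v reps t :
    cst s p = GetTag v reps -> qsize <= size reps ->
    t \in [seq etag x.2 | x <- reps & x.2 \in signed s] ->
    all (fun x => tag_le (etag x.2) t) [seq x <- reps | x.2 \in signed s] ->
    step s (LPut p (cnt s p) (t.1.+1, p)) (putdata s p (t.1.+1, p) v)
| SFinData s p reps t v :
    cst s p = GetData reps -> qsize <= size reps ->
    let vl := [seq [seq x <- r.2 | x \in signed s] | r <- reps] in
    let occ := fun t' => count (fun l => has (fun x => etag x == t') l) vl in
    k <= occ t ->
    (forall t', k <= occ t' -> tag_le t' t) ->
    v = decode [seq eelem x | x <- flatten vl & etag x == t] ->
    step s (LPut p (cnt s p) t) (putdata s p t v)
| SFinPut s p t acks :
    cst s p = PutData t acks -> qsize <= size acks ->
    step s (LComplete p (cnt s p))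
      (St (lists s) (net s) (upd (cst s) p Idle) (cnt s) (signed s)).

Inductive run : state -> seq label -> state -> Prop :=
| RNil s : run s [::] s
| RCons s l s' tr s'' : step s l s' -> run s' tr s'' -> run s (l :: tr) s''.

Definition init (t0 : ptag) (v0 : V) (p0 : W) : state :=
  St (fun j => [:: (t0, encode v0 j, p0)]) [::] (fun _ => Idle) (fun _ => 0)
     [seq (t0, encode v0 j, p0) | j <- enum Node].

End Protocol.

(* Main.v *)
Require Import Defs.
From HB Require Import structures.
From mathcomp Require Import all_boot all_order.
From mathcomp Require Import zify.
From Stdlib Require List.
Set Implicit Arguments. Unset Strict Implicit. Unset Printing Implicit Defensive.
Import Order.TTheory.

Section Proof.
Variables (Node : finType) (d : Order.disp_t) (W : orderType d) (V : Type) (E : eqType).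

Lemma tag_leE (t1 t2 : ptag W) :
  tag_le t1 t2 = (t1.1 < t2.1)%N || ((t1.1 == t2.1) && (t1.2 <= t2.2)%O).
Proof.
case: t1 t2 => [a x] [c y]; rewrite /tag_le /tag_lt /= xpair_eqE le_eqVlt.
by case: (a == c); case: (x == y); case: (a < c)%N.
Qed.

Lemma tag_le_refl (t : ptag W) : tag_le t t.
Proof. by rewrite /tag_le eqxx. Qed.

Lemma tag_le_trans (t1 t2 t3 : ptag W) : tag_le t1 t2 -> tag_le t2 t3 -> tag_le t1 t3.
Proof.
rewrite !tag_leE => /orP[h1|/andP[/eqP h1 h1']] /orP[h2|/andP[/eqP h2 h2']].
- by rewrite (ltn_trans h1 h2).
- by rewrite -h2 h1.
- by rewrite h1 h2.
- by rewrite h1 h2 eqxx (le_trans h1' h2') orbT.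
Qed.

Lemma tag_le_anti (t1 t2 : ptag W) : tag_le t1 t2 -> tag_le t2 t1 -> t1 = t2.
Proof.
case: t1 t2 => [a x] [c y]; rewrite !tag_leE /= => /orP[h1|/andP[/eqP h1 h1']] /orP[h2|/andP[/eqP h2 h2']].
- lia.
- lia.
- lia.
- by rewrite h1; congr pair; apply/eqP; rewrite eq_le h1' h2'.
Qed.

Definition hasge (t : ptag W) (l : seq (entry W E)) := has (fun x => tag_le t (etag x)) l.
Definition utags (l : seq (entry W E)) := uniq (map (@etag _ W E) l).

Variable delta : nat.

Lemma evict_uniq l : utags l -> utags (evict delta l).
Proof.
rewrite /evict; case: ifP => // _ u.
apply: subseq_uniq u; apply: map_subseq; exact: filter_subseq.
Qed.

Lemma survivor (l : seq (entry W E)) : utags l -> (1 < size l)%N ->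
  has (fun x => ~~ all (fun y => tag_le (etag x) (etag y)) l) l.
Proof.
case: l => [|a [|c r]] // u _; apply: contraT => /hasPn H.
move: u => /= /andP[]; rewrite inE negb_or => /andP[ac _] _.
have cin : c \in [:: a, c & r] by rewrite !inE eqxx orbT.
move: (H a (mem_head _ _)) (H c cin) => /= /negbNE/and3P[_ ac1 _] /negbNE/and3P[ca1 _ _].
by rewrite (tag_le_anti ac1 ca1) eqxx in ac.
Qed.

Lemma evict_has t l : utags l -> hasge t l -> hasge t (evict delta l).
Proof.
rewrite /evict; case: ifP => // hs u /hasP[y yl ty].
have /hasP[z zl Pz] := survivor u (leq_ltn_trans (ltn0Sn _) hs).
apply/hasP; case Py: (~~ all (fun y0 => tag_le (etag y) (etag y0)) l).
  by exists y => //; rewrite mem_filter Py.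
exists z; first by rewrite mem_filter Pz.
move/negbFE: Py => /allP/(_ z zl) yz; exact: tag_le_trans ty yz.
Qed.

Lemma pre_uniq (sg : seq (entry W E)) e l : utags l ->
  utags (if (e \in sg) && ~~ has (fun x => etag x == etag e) l then rcons l e else l).
Proof.
move=> u; case: ifP => // /andP[_ hn].
rewrite /utags map_rcons rcons_uniq; move: u; rewrite /utags => ->; rewrite andbT.
apply: contra hn => /mapP[x xl ex].
by apply/hasP; exists x => //; rewrite ex.
Qed.

Lemma store_uniq sg e l : utags l -> utags (store delta sg e l).
Proof. by move=> u; apply: evict_uniq; apply: pre_uniq. Qed.

Lemma store_has t sg e l : utags l -> hasge t l -> hasge t (store delta sg e l).
Proof.
move=> u h; rewrite /store; apply: evict_has; first exact: pre_uniq.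
case: ifP => // _; move: h; rewrite /hasge has_rcons => ->; by rewrite orbT.
Qed.

Lemma store_self sg e l : e \in sg -> utags l -> hasge (etag e) (store delta sg e l).
Proof.
move=> es u; rewrite /store; apply: evict_has; first exact: pre_uniq.
case: ifP => [_|]; first by rewrite /hasge has_rcons tag_le_refl.
rewrite es /= => /negbFE/hasP[x xl /eqP ex]; apply/hasP; exists x => //.
by rewrite ex tag_le_refl.
Qed.

Lemma store_signed (sg : seq (entry W E)) e l : all (mem sg) l -> all (mem sg) (store delta sg e l).
Proof.
move=> h; rewrite /store /evict.
have h' : all (mem sg) (if (e \in sg) && ~~ has (fun x => etag x == etag e) l then rcons l e else l).
  by case: ifP => // /andP[es _]; rewrite all_rcons h andbT.
case: ifP => // _; apply/allP => x; rewrite mem_filter => /andP[_ xl]; exact: (allP h' x xl).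
Qed.

Variables (k b : nat) (Byz : {set Node}) (encode : V -> Node -> E) (decode : seq E -> V).

Notation St := (state Node W V E).
Notation stp := (step k delta Byz encode decode).
Notation rn := (run k delta Byz encode decode).
Notation AN j := (@ANode Node d W j).
Notation AP q := (@AProc Node d W q).
Notation PD t acks := (@PutData Node d W V E t acks).
Notation GD reps := (@GetData Node d W V E reps).
Notation AK p c := (@Ack d W E p c).

Definition kind (cs : cstate Node W V E) : option (option (ptag W)) :=
  match cs with GetTag _ _ | GetData _ => None | PutData t _ => Some (Some t) | _ => Some None end.

Lemma kind_crecv (p : W) (c : nat) (cs : cstate Node W V E) (src : addr Node W) (bd : body W E) : kind (crecv p c cs src bd) = kind cs.
Proof.
case: src => [j|q] //; case: cs => //= [v reps|reps|t acks]; case: bd => //= *; by case: ifP.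
Qed.

Lemma crecv_cases (p : W) (c : nat) (cs : cstate Node W V E) (src : addr Node W) (bd : body W E) :
  crecv p c cs src bd = cs \/
  (exists j v reps e, [/\ src = AN j, cs = GetTag v reps, bd = RTag p c e, j \notin unzip1 reps
       & crecv p c cs src bd = GetTag v (rcons reps (j, e))]) \/
  (exists j reps l, [/\ src = AN j, cs = GD reps, bd = RData p c l, j \notin unzip1 reps
       & crecv p c cs src bd = GD (rcons reps (j, l))]) \/
  (exists j t acks, [/\ src = AN j, cs = PD t acks, bd = AK p c, j \notin acks
       & crecv p c cs src bd = PD t (rcons acks j)]).
Proof.
case: src => [j|q]; last by left.
case: cs => [|v reps|reps|t acks|]; try by left.
- case: bd => [p' c'|p' c' e|p' c'|p' c' l|p' c' e|p' c']; try by left.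
  rewrite /=; case: ifP => [/and3P[/eqP-> /eqP-> h]|]; last by left.
  by right; left; exists j, v, reps, e.
- case: bd => [p' c'|p' c' e|p' c'|p' c' l|p' c' e|p' c']; try by left.
  rewrite /=; case: ifP => [/and3P[/eqP-> /eqP-> h]|]; last by left.
  by right; right; left; exists j, reps, l.
- case: bd => [p' c'|p' c' e|p' c'|p' c' l|p' c' e|p' c']; try by left.
  rewrite /=; case: ifP => [/and3P[/eqP-> /eqP-> h]|]; last by left.
  by right; right; right; exists j, t, acks.
Qed.

Definition putok (s : St) q (e : entry W E) :=
  match kind (cst s q) with None => False | Some (Some t) => etag e = t | Some None => True end.
Definition ackok (s : St) q j :=
  match kind (cst s q) with None => False | Some (Some t) => is_true (hasge t (lists s j)) | Some None => True end.

Definition Gmsg (s : St) (m : msg Node W E) : Prop :=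
  (forall q, msrc m = AP q -> match mbody m with
     | QTag _ c => is_true (c <= cnt s q)
     | Put _ c e => [/\ c <= cnt s q, e \in signed s & (c = cnt s q -> putok s q e)]
     | _ => True end) /\
  (forall j q, msrc m = AN j -> j \notin Byz -> mdst m = AP q -> match mbody m with
     | RTag _ c _ => is_true (c <= cnt s q)
     | Ack _ c => c <= cnt s q /\ (c = cnt s q -> ackok s q j)
     | _ => True end).

Definition Gst (s : St) : Prop :=
  (forall j, utags (lists s j) /\ all (mem (signed s)) (lists s j)) /\
  (forall q, match cst s q with
     | PutData t acks => uniq acks /\ forall j, j \in acks -> j \notin Byz -> hasge t (lists s j)
     | GetTag _ reps => uniq (unzip1 reps)
     | _ => True end).

Definition G (s : St) := Gst s /\ forall m, List.In m (net s) -> Gmsg s m.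

Definition mono (s s' : St) :=
  [/\ forall q, cnt s q <= cnt s' q,
      {subset signed s <= signed s'},
      forall q, cnt s' q = cnt s q ->
        kind (cst s q) = None \/ kind (cst s' q) = kind (cst s q) \/ kind (cst s' q) = Some None
    & forall t j, j \notin Byz -> utags (lists s j) -> hasge t (lists s j) -> hasge t (lists s' j)].

Lemma Gmsg_mono s s' m : (forall j, utags (lists s j)) -> mono s s' -> Gmsg s m -> Gmsg s' m.
Proof.
move=> hu; case=> hc hs hk hl [h1 h2]; split.
- move=> q /h1; case: (mbody m) => // [p c|p c e]; first by move=> h; exact: leq_trans h (hc q).
  case=> h3 h4 h5; split; [exact: leq_trans h3 (hc q)|exact: hs|].
  move=> ec; have ec' : c = cnt s q by apply/eqP; rewrite eqn_leq h3 ec hc.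
  move: (h5 ec'); rewrite /putok; have := hk q; rewrite -ec -ec' => /(_ erefl).
  by case=> [->|[->|->]].
- move=> j q hj hb hd; move: (h2 j q hj hb hd); case: (mbody m) => // [p c e|p c].
    by move=> h; exact: leq_trans h (hc q).
  case=> h3 h5; split; first exact: leq_trans h3 (hc q).
  move=> ec; have ec' : c = cnt s q by apply/eqP; rewrite eqn_leq h3 ec hc.
  move: (h5 ec'); rewrite /ackok; have := hk q; rewrite -ec -ec' => /(_ erefl).
  case=> [->|[->|->]] //.
  by case: (kind (cst s q)) => // -[t|] //; apply: hl.
Qed.


Lemma in_del (A : Type) (m m' : A) n1 n2 :
  List.In m (n1 ++ n2 ++ [:: m']) -> List.In m (n1 ++ n2) \/ m = m'.
Proof.
rewrite !List.in_app_iff /= => -[h|[h|[h|[]]]]; [left; left|left; right|right] => //.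
Qed.

Lemma in_del2 (A : Type) (m m0 : A) n1 n2 :
  List.In m (n1 ++ n2) -> List.In m (n1 ++ m0 :: n2).
Proof. rewrite !List.in_app_iff /= => -[h|h]; [left|right; right] => //. Qed.

Lemma in_mid (A : Type) (m0 : A) n1 n2 : List.In m0 (n1 ++ m0 :: n2).
Proof. by rewrite List.in_app_iff /=; right; left. Qed.

Lemma in_map_ex (A B : Type) (f : A -> B) (s : seq A) m :
  List.In m [seq f x | x <- s] -> exists2 x, List.In x s & m = f x.
Proof.
elim: s => //= a s IH [<-|/IH [x h ->]].
  by exists a => //; left.
by exists x => //; right.
Qed.

Lemma in_map_mem (A : eqType) (B : Type) (f : A -> B) (s : seq A) m :
  List.In m [seq f x | x <- s] -> exists2 x, x \in s & m = f x.
Proof.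
elim: s => //= a s IH [<-|/IH [x h ->]].
  by exists a => //; exact: mem_head.
by exists x => //; rewrite inE h orbT.
Qed.

Lemma updE (A : eqType) (R : Type) (f : A -> R) a r x :
  upd f a r x = if x == a then r else f x.
Proof. by []. Qed.

Lemma step_mono s l s' : stp s l s' -> mono s s'.
Proof.
case=> {s l s'}.
- move=> s p o _; split => //=.
  + by move=> q; rewrite updE; case: eqP => [->|].
  + move=> q; rewrite !updE; case: eqP => [->|]; last by right; left.
    by move=> /esym/n_Sn.
- move=> s p _; split => //=; try by move=> *.
  by move=> q; rewrite !updE; case: eqP => _ _; right; [right|left].
- by move=> *; split => //= *; right; left.
- by move=> *; split => //= *; right; left.
- move=> s n1 n2 j src p c e _ _; split => //=; first by move=> *; right; left.
  move=> t j' hb hu hg; rewrite updE; case: eqP => [ej|] //; subst j'; exact: store_has.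
- by move=> *; split => //= *; right; left.
- move=> s n1 n2 p src bd _; split => //=; try by move=> *.
  move=> q; rewrite updE; case: eqP => [->|]; last by right; left.
  by rewrite kind_crecv; right; left.
- by move=> *; split => //= *; right; left.
- move=> s p v reps t hc _ _ _; split => //=.
  + by move=> x; rewrite mem_cat => ->.
  + by move=> q; rewrite updE; case: eqP => [->|]; [rewrite hc; left|right; left].
- move=> s p reps t v hc *; split => //=.
  + by move=> x; rewrite mem_cat => ->.
  + by move=> q; rewrite updE; case: eqP => [->|]; [rewrite hc; left|right; left].
- move=> s p t acks *; split => //=; try by move=> *.
  by move=> q; rewrite !updE; case: eqP => _ _; right; [right|left].
Qed.


Lemma G_init t0 v0 p0 : G (init encode t0 v0 p0).
Proof.
split; last by [].
split => [j|q] //=; split => //=; rewrite andbT.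
by apply: map_f; rewrite mem_enum.
Qed.

Lemma G_old s s' m : G s -> mono s s' -> List.In m (net s) -> Gmsg s' m.
Proof. move=> [[hl _] hm] mo /hm; apply: Gmsg_mono mo => j; exact: (hl j).1. Qed.

Lemma putdata_G s p t v : kind (cst s p) = None -> G s -> G (putdata encode s p t v).
Proof.
move=> hk HG; have mo : mono s (putdata encode s p t v).
  split => //=.
  + by move=> x; rewrite mem_cat => ->.
  + by move=> q; rewrite updE; case: eqP => [->|]; [rewrite hk; left|right; left].
move: HG => [[hl hc] hm]; split; first split.
- move=> j; have [h1 h2] := hl j; split => //=.
  by apply: sub_all h2 => x /= xs; rewrite mem_cat xs.
- move=> q /=; rewrite updE; case: eqP => [_|_] //; exact: hc.
- move=> m /= /List.in_app_iff [hin|hin]; first exact: (G_old (conj (conj hl hc) hm) mo).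
  have [j _ ->] := in_map_ex hin; split => //= q [<-]; split => //.
  + by rewrite mem_cat; apply/orP; right; apply: map_f; rewrite mem_enum.
  + by move=> _; rewrite /putok /= updE eqxx.
Qed.

Lemma G_step s l s' : G s -> stp s l s' -> G s'.
Proof.
move=> HG st; have mo := step_mono st; move: HG mo.
case: st => {s l s'}.
-
  move=> s p o hi HG mo; move: (HG) => [[hl hc] hm]; split; first split.
  + exact: hl.
  + move=> q /=; rewrite updE; case: eqP => [_|_]; last exact: hc.
    by clear mo; case: o.
  + move=> m /= /List.in_app_iff [hin|hin]; first exact: (G_old HG mo).
    have [j _ ->] := in_map_ex hin; split => //= q [<-].
    by clear mo HG hin; case: o => [|v] //=; rewrite updE eqxx.
-
  move=> s p hp HG mo; move: (HG) => [[hl hc] hm]; split; first split.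
  + exact: hl.
  + move=> q /=; rewrite updE; case: eqP => [_|_] //; exact: hc.
  + move=> m /= hin; exact: (G_old HG mo).
-
  move=> s n1 n2 j src p c e hn hj he hall HG mo; move: (HG) => [[hl hc] hm]; split; first split.
  + exact: hl.
  + exact: hc.
  + move=> m /= hin0; case: (in_del hin0) => [hin|->]; first by apply: (G_old HG mo); rewrite hn; apply: in_del2.
    have := hm _ (eq_ind_r (fun x => List.In _ x) (in_mid _ _ _) hn).
    case=> h1 _; split => //= j0 q _ _ hs; exact: (h1 q hs).
-
  move=> s n1 n2 j src p c hn hj HG mo; move: (HG) => [[hl hc] hm]; split; first split.
  + exact: hl.
  + exact: hc.
  + move=> m /= hin0; case: (in_del hin0) => [hin|->]; first by apply: (G_old HG mo); rewrite hn; apply: in_del2.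
    by split.
-
  move=> s n1 n2 j src p c e hn hj HG mo; move: (HG) => [[hl hc] hm]; split; first split.
  + move=> j' /=; rewrite updE; case: eqP => [ej|_]; last exact: hl.
    subst j'.
    have [h1 h2] := hl j; split; [exact: store_uniq|exact: store_signed].
  + move=> q /=; case: (cst s q) (hc q) => // t acks [u hh]; split => // j' ja jb.
    rewrite updE; case: eqP => [ej|_]; last exact: hh.
    subst j'; apply: store_has; [exact: (hl j).1|exact: hh].
  + move=> m /= hin0; case: (in_del hin0) => [hin|->]; first by apply: (G_old HG mo); rewrite hn; apply: in_del2.
    have := hm _ (eq_ind_r (fun x => List.In _ x) (in_mid _ _ _) hn).
    case=> h1 _; split => //= j0 q [<-] _ hs.
    have [c1 c2 c3] := h1 q hs; split => // ec.
    move: (c3 ec); rewrite /ackok /putok /=.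
    case: (kind (cst s q)) => // -[t|] // <-.
    rewrite updE eqxx; apply: store_self => //; exact: (hl j).1.
-
  move=> s n1 n2 j src bd hn hj HG mo; move: (HG) => [[hl hc] hm]; split; first split.
  + exact: hl.
  + exact: hc.
  + move=> m /= hin; by apply: (G_old HG mo); rewrite hn; apply: in_del2.
-
  move=> s n1 n2 p src bd hn HG mo; move: (HG) => [[hl hc] hm]; split; first split.
  + exact: hl.
  + move=> q /=; rewrite updE; case: eqP => [eq|_]; last exact: hc.
    subst q.
    have hmsg := hm _ (eq_ind_r (fun x => List.In _ x) (in_mid _ _ _) hn).
    have := hc p.
    case: (crecv_cases p (cnt s p) (cst s p) src bd) => [->|[[j [v [reps [e [_ hcs _ hnot ->]]]]]|[[j [reps [l [_ hcs _ hnot ->]]]]|[j [t [acks [hsrc hcs hbd hnot ->]]]]]]] //; rewrite hcs //=.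
    * by rewrite /unzip1 map_rcons rcons_uniq; move: hnot; rewrite /unzip1 => ->.
    * case=> u hh; rewrite rcons_uniq hnot u; split => // j' ; rewrite mem_rcons inE => /orP[/eqP ->|]; last exact: hh.
      move=> jb; case: hmsg => _ /(_ j p hsrc jb erefl); rewrite hbd /= => -[_ /(_ erefl)].
      by rewrite /ackok hcs.
  + move=> m /= hin; by apply: (G_old HG mo); rewrite hn; apply: in_del2.
-
  move=> s j dst bd hj hall HG mo; move: (HG) => [[hl hc] hm]; split; first split.
  + exact: hl.
  + exact: hc.
  + move=> m /= /List.in_app_iff [hin|[<-|[]]]; first exact: (G_old HG mo).
    split => //= j0 q [<-] jb; by rewrite hj in jb.
- move=> s p v reps t hcs _ _ _ HG _; apply: putdata_G HG; by rewrite hcs.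
- move=> s p reps t v hcs _ vl occ _ _ _ HG _; apply: putdata_G HG; by rewrite hcs.
- move=> s p t acks hcs _ HG mo; move: (HG) => [[hl hc] hm]; split; first split.
  + exact: hl.
  + move=> q /=; rewrite updE; case: eqP => [_|_] //; exact: hc.
  + move=> m /= hin; exact: (G_old HG mo).
Qed.


Lemma run_preserve (P : St -> Prop) :
  (forall s l s', P s -> stp s l s' -> P s') ->
  forall s (tr : seq (label W V)) s', rn s tr s' -> P s -> P s'.
Proof. move=> h s tr s'; elim=> {s tr s'} // s l s1 tr s2 st _ IH Ps; apply: IH; exact: h st. Qed.

Lemma run_cat s (tr1 tr2 : seq (label W V)) s'' : rn s (tr1 ++ tr2) s'' -> exists s1, rn s tr1 s1 /\ rn s1 tr2 s''.
Proof.
elim: tr1 s => [|l tr1 IH] s /=; first by move=> h; exists s; split => //; constructor.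
move=> h; inversion h as [|x l' s' tr' y st hr]; subst.
have [s1 [h1 h2]] := IH _ hr; exists s1; split => //; econstructor; eauto.
Qed.

Lemma run_nth s tr s' i l : rn s tr s' -> nth (LInternal W V) tr i = l -> l <> LInternal W V ->
  exists s1 s2, [/\ rn s (take i tr) s1, stp s1 l s2 & rn s2 (drop i.+1 tr) s'].
Proof.
move=> hr hn hl; have hi : i < size tr.
  by rewrite ltnNge; apply/negP => hs; apply: hl; rewrite -hn nth_default.
have e : tr = take i tr ++ l :: drop i.+1 tr by rewrite -hn -drop_nth // cat_take_drop.
move: hr; rewrite {1}e => /run_cat [s1 [h1 h2]].
inversion h2 as [|x l' s2 tr' y st hr]; subst; exists s1, s2; split => //.
Qed.

Definition inv (R : cstate Node W V E -> Prop) p n (s : St) :=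
  n <= cnt s p /\ (cnt s p = n -> R (cst s p)).

Lemma inv_step (R : cstate Node W V E -> Prop) p n s l s' :
  R (Idle Node W V E) -> R (Crashed Node W V E) ->
  (forall c cs src bd, R cs -> R (crecv p c cs src bd)) ->
  (forall cs t, R cs -> kind cs = None -> R (PD t [::])) ->
  inv R p n s -> stp s l s' -> inv R p n s'.
Proof.
move=> hI hC hr hp hinv st; case: st hinv => {s l s'}.
- move=> s p' o _ [h1 h2]; rewrite /inv /= !updE; case: eqP => [?|_]; subst => //.
  by split => [|/esym e]; [exact: leqW| move: h1; rewrite e ltnn].
- by move=> s p' _ [h1 h2]; rewrite /inv /= !updE; case: eqP => [?|_]; subst.
- by move=> *.
- by move=> *.
- by move=> *.
- by move=> *.
- move=> s n1 n2 p' src bd _ [h1 h2]; rewrite /inv /= !updE; case: eqP => [?|_]; subst => //.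
  by split => // /h2 /hr.
- by move=> *.
- move=> s p' v reps t hc _ _ _ [h1 h2]; rewrite /inv /= !updE; case: eqP => [e|_] //.
  subst p'; split => // /h2 hR; apply: hp hR _; by rewrite hc.
- move=> s p' reps t v hc _ vl occ _ _ _ [h1 h2]; rewrite /inv /= !updE; case: eqP => [e|_] //.
  subst p'; split => // /h2 hR; apply: hp hR _; by rewrite hc.
- by move=> s p' t acks _ _ [h1 h2]; rewrite /inv /= !updE; case: eqP => [?|_]; subst.
Qed.

Definition Rgood t (cs : cstate Node W V E) : Prop :=
  match cs with Idle | Crashed => True | PutData t' _ => t' = t | _ => False end.
Definition Rnr (cs : cstate Node W V E) : Prop :=
  match cs with GetData _ => False | _ => True end.

Lemma good_step t p n s l s' : inv (Rgood t) p n s -> stp s l s' -> inv (Rgood t) p n s'.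
Proof.
apply: inv_step => //.
- move=> c cs src bd h.
  case: (crecv_cases p c cs src bd) => [->|[[j [v [reps [e [_ hcs _ _ ->]]]]]|[[j [reps [l0 [_ hcs _ _ ->]]]]|[j [t' [acks [_ hcs _ _ ->]]]]]]] //; by rewrite hcs in h.
- by case.
Qed.

Lemma nr_step p n s l s' : inv Rnr p n s -> stp s l s' -> inv Rnr p n s'.
Proof.
apply: inv_step => //.
move=> c cs src bd h.
case: (crecv_cases p c cs src bd) => [->|[[j [v [reps [e [_ hcs _ _ ->]]]]]|[[j [reps [l0 [_ hcs _ _ ->]]]]|[j [t' [acks [_ hcs _ _ ->]]]]]]] //; by rewrite hcs in h.
Qed.

Lemma cnt_run (p : W) (s : St) (tr : seq (label W V)) s' : rn s tr s' -> cnt s p <= cnt s' p.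
Proof.
move=> hr; have := @run_preserve (fun x => cnt s p <= cnt x p) _ _ _ _ hr (leqnn _); apply.
move=> x l x' h st; case: (step_mono st) => hc _ _ _; exact: leq_trans h (hc p).
Qed.

Lemma G_run s tr s' : rn s tr s' -> G s -> G s'.
Proof. apply: run_preserve => x l x' h st; exact: G_step h st. Qed.

Lemma step_LPut s p n t s' : stp s (LPut V p n t) s' ->
  [/\ cnt s p = n, kind (cst s p) = None, cst s' p = PD t [::] & cnt s' p = n].
Proof.
move=> st; inversion st; subst => /=; rewrite updE eqxx; split => //; match goal with h : cst _ _ = _ |- _ => by rewrite h end.
Qed.

Lemma step_LComplete s p n s' : stp s (LComplete V p n) s' ->
  exists t acks, [/\ cst s p = PD t acks, qsize Node k <= size acks, cnt s p = n,
     cst s' p = Idle Node W V E & lists s' = lists s /\ cnt s' = cnt s].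
Proof.
move=> st; inversion st; subst => /=; exists t, acks; split => //; by rewrite updE eqxx.
Qed.

Lemma step_LInvoke s p n o s' : stp s (LInvoke p n o) s' ->
  [/\ n = (cnt s p).+1, cnt s' p = n &
      cst s' p = match o with ORead => GD [::] | OWrite v => GetTag v [::] end].
Proof.
move=> st; inversion st; subst => /=; by rewrite !updE eqxx.
Qed.

Lemma LPut_before_invoke s0 tr s p n t o i j :
  rn s0 tr s -> nth (LInternal W V) tr i = LPut V p n t ->
  nth (LInternal W V) tr j = LInvoke p n o -> j < i.
Proof.
move=> hr hi hj; rewrite ltnNge leq_eqVlt; apply/negP => /orP[/eqP e|lt].
  by move: hj; rewrite -e hi.
have [s1 [s2 [h1 h2 h3]]] := run_nth hr hi (fun e => ltac:(discriminate e)).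
have hj' : nth (LInternal W V) (drop i.+1 tr) (j - i.+1) = LInvoke p n o.
  by rewrite nth_drop subnKC.
have [s3 [s4 [h4 h5 h6]]] := run_nth h3 hj' (fun e => ltac:(discriminate e)).
have [c1 _ _ c4] := step_LPut h2.
have [e1 _ _] := step_LInvoke h5.
have := cnt_run p h4; lia.
Qed.


Section K.
Variables (A : seq Node) (t1 : ptag W) (c0 : nat) (p2 : W).

Definition K (s : St) :=
  [/\ forall j, j \in A -> j \notin Byz -> hasge t1 (lists s j),
      forall m, List.In m (net s) -> forall j pp c e,
        m = Msg (AN j) (AP p2) (RTag pp c e) -> j \in A -> j \notin Byz -> c0 < c ->
        tag_le t1 (etag e) /\ e \in signed s
    & forall v reps, cst s p2 = GetTag v reps -> c0 < cnt s p2 ->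
        forall j e, (j, e) \in reps -> j \in A -> j \notin Byz ->
        tag_le t1 (etag e) /\ e \in signed s].

Lemma K_step s l s' : G s -> K s -> stp s l s' -> K s'.
Proof.
move=> HG HK st; have mo := step_mono st; move: HG HK mo; case: st => {s l s'}.
- move=> s p o hi HG [k1 k2 k3] [mc ms _ _]; split => //=.
  + move=> m /List.in_app_iff [hin|hin]; first exact: k2.
    by have [j _ ->] := in_map_ex hin.
  + rewrite !updE; case: eqP => [ep|np]; last exact: k3.
    by subst; clear mc ms; case: o => // v0 v reps [_ <-].
- move=> s p hp HG [k1 k2 k3] _; split => //=.
  rewrite !updE; case: eqP => _; last exact: k3.
  by move=> v0 r0 e0; discriminate e0.
- move=> s n1 n2 j src p c e hn hj he hall HG [k1 k2 k3] _; split => //=.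
  move=> m hin0; case: (in_del hin0) => [hin|->].
    by apply: k2; rewrite hn; apply: in_del2.
  move=> j0 pp c' e' [ej hs ep ec ee] jA jB _; subst j0 e'; split.
    have /hasP[y yl ty] := k1 j jA jB.
    exact: tag_le_trans ty (allP hall y yl).
  by have := allP (HG.1.1 j).2 e he.
- move=> s n1 n2 j src p c hn hj HG [k1 k2 k3] _; split => //=.
  move=> m hin0; case: (in_del hin0) => [hin|->] //.
  by apply: k2; rewrite hn; apply: in_del2.
- move=> s n1 n2 j src p c e hn hj HG [k1 k2 k3] _; split => //=.
  + move=> j' jA jB; rewrite updE; case: eqP => [ej|_]; last exact: k1.
    subst j'; apply: store_has; [exact: (HG.1.1 j).1|exact: k1].
  + move=> m hin0; case: (in_del hin0) => [hin|->] //.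
    by apply: k2; rewrite hn; apply: in_del2.
- move=> s n1 n2 j src bd hn hj HG [k1 k2 k3] _; split => //=.
  move=> m hin; by apply: k2; rewrite hn; apply: in_del2.
- move=> s n1 n2 p src bd hn HG [k1 k2 k3] _; split => //=.
  + move=> m hin; by apply: k2; rewrite hn; apply: in_del2.
  + rewrite updE; case: eqP => [ep|np]; last exact: k3.
    subst p => v reps.
    case: (crecv_cases p2 (cnt s p2) (cst s p2) src bd) => [->|[[j [v' [reps' [e [hsrc hcs hbd _ ->]]]]]|[[j [reps' [l0 [_ hcs _ _ ->]]]]|[j [t' [acks [_ hcs _ _ ->]]]]]]] //.
      exact: k3.
    case=> ev er; subst v' reps => hc j0 e0; rewrite mem_rcons inE => /orP[/eqP[-> ->]|hr].
      move=> jA jB.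
      have hin : List.In (Msg src (AP p2) bd) (net s) by rewrite hn; exact: in_mid.
      have em : Msg src (AP p2) bd = Msg (AN j) (AP p2) (RTag p2 (cnt s p2) e) by rewrite hsrc hbd.
      exact: (k2 _ hin j p2 (cnt s p2) e em jA jB hc).
    exact: k3 hcs hc j0 e0 hr.
- move=> s j dst bd hj hall HG [k1 k2 k3] _; split => //=.
  move=> m /List.in_app_iff [hin|[<-|[]]]; first exact: k2.
  by move=> j0 pp c e [ej _ _] _ jB _; subst j0; rewrite hj in jB.
- move=> s p v reps t hcs _ _ _ HG [k1 k2 k3] [_ ms _ _]; split => //=.
  + move=> m /List.in_app_iff [hin|hin].
      by move=> j pp c e em jA jB hc; have [] := k2 m hin j pp c e em jA jB hc; split => //; exact: ms.
    by have [j _ ->] := in_map_ex hin.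
  + rewrite !updE; case: eqP => _.
      by move=> v0 r0 e0; discriminate e0.
    move=> v0 r0 h hc j e hr jA jB; have [] := k3 v0 r0 h hc j e hr jA jB; split => //; exact: ms.
- move=> s p reps t v hcs _ vl occ _ _ _ HG [k1 k2 k3] [_ ms _ _]; split => //=.
  + move=> m /List.in_app_iff [hin|hin].
      by move=> j pp c e em jA jB hc; have [] := k2 m hin j pp c e em jA jB hc; split => //; exact: ms.
    by have [j _ ->] := in_map_ex hin.
  + rewrite !updE; case: eqP => _.
      by move=> v0 r0 e0; discriminate e0.
    move=> v0 r0 h hc j e hr jA jB; have [] := k3 v0 r0 h hc j e hr jA jB; split => //; exact: ms.
- move=> s p t acks hcs _ HG [k1 k2 k3] _; split => //=.
  rewrite !updE; case: eqP => _; last exact: k3.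
  by move=> v0 r0 e0; discriminate e0.
Qed.

End K.


Lemma quorum_inter (A R : seq Node) : uniq A -> uniq R ->
  qsize Node k <= size A -> qsize Node k <= size R -> #|Byz| <= b -> 3 * b + k < #|Node| ->
  exists j, [/\ j \in A, j \in R & j \notin Byz].
Proof.
move=> uA uR hA hR hB hb.
case: (boolP [exists j, [&& j \in A, j \in R & j \notin Byz]]) => [/existsP [j /and3P[]]|hn].
  by move=> *; exists j.
exfalso.
have sub : [set j in A] :&: [set j in R] \subset Byz.
  apply/subsetP => j; rewrite !inE => /andP[ja jr].
  by move/existsPn: hn => /(_ j); rewrite ja jr /= negbK.
have c1 := subset_leq_card sub.
have c2 := cardsUI [set j in A] [set j in R].
have c3 : #|[set j in A] :|: [set j in R]| <= #|Node| by apply: max_card.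
have eA : #|[set j in A]| = size A by rewrite cardsE; apply/card_uniqP.
have eR : #|[set j in R]| = size R by rewrite cardsE; apply/card_uniqP.
move: hA hR; rewrite /qsize; lia.
Qed.

Lemma step_LPut_tag s p n t s' : stp s (LPut V p n t) s' ->
  (exists reps, cst s p = GD reps) \/
  exists v reps t', [/\ cst s p = GetTag v reps, qsize Node k <= size reps,
     all (fun x => tag_le (etag x.2) t') [seq x <- reps | x.2 \in signed s] & t = (t'.1.+1, p)].
Proof.
move=> st; inversion st; subst; first by right; exists v, reps, t0.
by left; exists reps.
Qed.

Lemma main_sec t0 v0 p0 (hk : 0 < k) (hByz : #|Byz| <= b) (hb : 3 * b + k < #|Node|)
  tr s (hrun : rn (init encode t0 v0 p0) tr s)
  p1 n1 t1 p2 n2 v2 t2 ip1 ic1 ii2 ip2 :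
  nth (LInternal W V) tr ip1 = LPut V p1 n1 t1 ->
  nth (LInternal W V) tr ic1 = LComplete V p1 n1 ->
  nth (LInternal W V) tr ii2 = LInvoke p2 n2 (OWrite v2) ->
  ic1 < ii2 ->
  nth (LInternal W V) tr ip2 = LPut V p2 n2 t2 ->
  tag_lt t1 t2.
Proof.
move=> H1 H2 H3 H4 H5.
have [sa [sc [ha hsa hsc]]] := run_nth hrun H2 (fun e => ltac:(discriminate e)).
have Ga : G sa := G_run ha (G_init _ _ _).
have [t [acks [hcs hqa hcn hci [hl hcc]]]] := step_LComplete hsa.
have tt1 : t = t1.
  case: (ltngtP ip1 ic1) => [lt|gt|eq].
  - have H1' : nth (LInternal W V) (take ic1 tr) ip1 = LPut V p1 n1 t1 by rewrite nth_take.
    have [s3 [s4 [_ h34 h4a]]] := run_nth ha H1' (fun e => ltac:(discriminate e)).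
    have [_ _ c4 n4] := step_LPut h34.
    have g : inv (Rgood t1) p1 n1 s4 by split; [rewrite n4|rewrite c4].
    have [_ /(_ hcn)] := run_preserve (@good_step t1 p1 n1) h4a g.
    by rewrite hcs.
  - have g : inv (Rgood t1) p1 n1 sc by split; rewrite hcc hcn // hci.
    have H1' : nth (LInternal W V) (drop ic1.+1 tr) (ip1 - ic1.+1) = LPut V p1 n1 t1.
      by rewrite nth_drop subnKC.
    have [s3 [s4 [h3 h34 _]]] := run_nth hsc H1' (fun e => ltac:(discriminate e)).
    have [c3 k3 _ _] := step_LPut h34.
    have [_ /(_ c3)] := run_preserve (@good_step t1 p1 n1) h3 g.
    by move: k3; case: (cst s3 p1).
  - by move: H1; rewrite eq H2.
subst t.
have [ua hA] : uniq acks /\ (forall j, j \in acks -> j \notin Byz -> hasge t1 (lists sa j)).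
  by have := Ga.1.2 p1; rewrite hcs.
have Gc : G sc := G_step Ga hsa.
set c0 := cnt sc p2.
have Kc : K acks t1 c0 p2 sc.
  split.
  - by move=> j jA jB; rewrite hl; exact: hA.
  - move=> m hin j pp c e em jA jB hc.
    have [_ h2] := Gc.2 m hin.
    move: (h2 j p2); rewrite em /= => /(_ erefl jB erefl) hc'.
    by move: hc; rewrite ltnNge hc'.
  - by move=> v reps _; rewrite ltnn.
have H3' : nth (LInternal W V) (drop ic1.+1 tr) (ii2 - ic1.+1) = LInvoke p2 n2 (OWrite v2).
  by rewrite nth_drop subnKC.
have [si [si' [hci2 hst hrest]]] := run_nth hsc H3' (fun e => ltac:(discriminate e)).
have [Gi Ki] : G si /\ K acks t1 c0 p2 si.
  apply: (run_preserve (P := fun x => G x /\ K acks t1 c0 p2 x)) hci2 (conj Gc Kc).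
  by move=> x l x' [gx kx] st; split; [exact: G_step gx st|exact: K_step gx kx st].
have [en2 cn2 cs2] := step_LInvoke hst.
have c0lt : c0 < n2.
  rewrite en2 ltnS /c0; have h := cnt_run p2 hci2; exact: h.
have Gi' := G_step Gi hst.
have Ki' := K_step Gi Ki hst.
have nr : inv Rnr p2 n2 si' by split; rewrite cn2 // cs2.
have lt2 : ii2 < ip2 := LPut_before_invoke hrun H5 H3.
have H5' : nth (LInternal W V) (drop (ii2 - ic1.+1).+1 (drop ic1.+1 tr)) (ip2 - ii2.+1)
    = LPut V p2 n2 t2.
  rewrite !nth_drop -H5; congr nth; lia.
have [sf [sf' [hf hstf _]]] := run_nth hrest H5' (fun e => ltac:(discriminate e)).
have [[Gf Kf] nrf] : (G sf /\ K acks t1 c0 p2 sf) /\ inv Rnr p2 n2 sf.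
  apply: (run_preserve (P := fun x => (G x /\ K acks t1 c0 p2 x) /\ inv Rnr p2 n2 x)) hf _;
    last by split.
  move=> x l x' [[gx kx] ix] st; split; [split; [exact: G_step gx st|exact: K_step gx kx st]|].
  exact: nr_step ix st.
have [cf _ _ _] := step_LPut hstf.
case: (step_LPut_tag hstf) => [[reps hr]|[v [reps [t' [hr hq hall ->]]]]].
  by move: nrf => [_ /(_ cf)]; rewrite hr.
have ur : uniq (unzip1 reps) by have := Gf.1.2 p2; rewrite hr.
have hqr : qsize Node k <= size (unzip1 reps) by rewrite size_map.
have [j [jA jR jB]] := quorum_inter ua ur hqa hqr hByz hb.
have [x xr ex] := mapP jR.
have c0f : c0 < cnt sf p2 by rewrite cf.
have xr' : (j, x.2) \in reps by rewrite ex -surjective_pairing.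
have [_ _ k3] := Kf.
have [l1 l2] := k3 _ _ hr c0f j x.2 xr' jA jB.
have l3 : tag_le (etag x.2) t'.
  by apply: (allP hall); rewrite mem_filter l2 xr.
have := tag_le_trans l1 l3; rewrite tag_leE /tag_lt /= => /orP[h|/andP[/eqP h _]].
  by rewrite ltnS ltnW.
by rewrite h ltnSn.
Qed.

End Proof.

Unset Implicit Arguments.

Theorem mainTheorem6
  (Node : finType) (d : Order.disp_t) (W : orderType d) (V : Type) (E : eqType)
  (k b delta : nat) (Byz : {set Node})
  (encode : V -> Node -> E) (decode : seq E -> V)
  (t0 : ptag W) (v0 : V) (p0 : W)
  (hk : (0 < k)%N) (hdelta : (0 < delta)%N)
  (hcode : forall (v : V) (S : seq Node),
      uniq S -> (k <= size S)%N -> decode [seq encode v j | j <- S] = v)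
  (hByz : (#|Byz| <= b)%N) (hb : (3 * b + k < #|Node|)%N)
  (tr : seq (label W V)) (s : state Node W V E)
  (hrun : run k delta Byz encode decode (init encode t0 v0 p0) tr s)
  (p1 : W) (n1 : nat) (t1 : ptag W) (p2 : W) (n2 : nat) (v2 : V) (t2 : ptag W)
  (ip1 ic1 ii2 ip2 ic2 : nat) :
  nth (LInternal W V) tr ip1 = LPut V p1 n1 t1 ->
  nth (LInternal W V) tr ic1 = LComplete V p1 n1 ->
  nth (LInternal W V) tr ii2 = LInvoke p2 n2 (OWrite v2) ->
  (ic1 < ii2)%N ->
  nth (LInternal W V) tr ip2 = LPut V p2 n2 t2 ->
  nth (LInternal W V) tr ic2 = LComplete V p2 n2 ->
  tag_lt t1 t2.
Proof.
move=> H1 H2 H3 H4 H5 _.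
exact: (main_sec hk hByz hb hrun H1 H2 H3 H4 H5).
Qed.
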